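(* Let $n \geq 4$ and let $\mathcal G = G(n;S)$ be a circulant graph on $n$ vertices with symbol $S$. Suppose that $\mathcal G$ has at least four distinct eigenvalues and that its spectrum satisfies the following condition: for all eigenvalues $\lambda_i,\lambda_j,\lambda_r,\lambda_s$ of $\mathcal G$ with $\lambda_r \neq \lambda_s$, $$\frac{\lambda_i-\lambda_j}{\lambda_r-\lambda_s}\in\mathbb{Q}.$$ Then $\mathcal G$ is integral, i.e. all eigenvalues of its adjacency matrix are integers.
   Context: For an integer $n$ and a set $S\subseteq\{1,\dots,n-1\}$ such that $s\in S$ if and only if $n-s\in S$, the circulant graph $G(n;S)$ is the undirected graph on vertex set $\mathbb{Z}_n=\{0,1,\dots,n-1\}$ in which $i$ and $j$ are adjacent iff $i-j \bmod n\in S$; $S$ is called the symbol and $\#S$ the degree. The eigenvalues (spectrum) of a graph are the eigenvalues of its adjacency matrix, listed with multiplicity as $\lambda_0,\dots,\lambda_{n-1}$. A graph is integral if all its eigenvalues are integers. *)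

(* Defs.v *)
From HB Require Import structures.
From mathcomp Require Import all_boot all_order all_algebra all_field.
Set Implicit Arguments. Unset Strict Implicit. Unset Printing Implicit Defensive.
Import Order.TTheory GRing.Theory Num.Theory.
Local Open Scope ring_scope.

(* A symbol S for the circulant graph G(n;S): a subset of Z_n (represented by
   'I_n) not containing 0, and closed under s |-> n - s. *)
Definition is_symbol (n : nat) (S : {set 'I_n}) : Prop :=
  (forall s : 'I_n, s \in S -> (0 < val s)%N) /\
  (forall s t : 'I_n, (val s + val t)%N = n -> (s \in S) = (t \in S)).

(* Adjacency matrix of G(n;S) over the algebraic complex numbers:
   i ~ j iff (i - j mod n) \in S. *)
Definition circulant_adj (n : nat) (S : {set 'I_n}) : 'M[algC]_n :=
  \matrix_(i < n, j < n)
    (([exists s in S, val s == ((val i + n - val j) %% n)%N]) : nat)%:R.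

(* Main.v *)
Require Import Defs.
From HB Require Import structures.
From mathcomp Require Import all_boot all_order all_algebra all_field.
From mathcomp Require Import zify.
Import Order.TTheory GRing.Theory Num.Theory.
Local Open Scope ring_scope.

Lemma coef_prodXsubC_sum (R : comNzRingType) (r : seq R) :
  ('X * \prod_(x <- r) ('X - x%:P))`_(size r) = - \sum_(x <- r) x.
Proof.
elim: r => [|x d IHd].
  by rewrite !big_nil mulr1 coefX oppr0.
rewrite !big_cons coefXM mulrBl coefB IHd opprD addrC; congr (- _ + _).
rewrite mul_polyC coefZ [size _]/= -(size_prod_XsubC _ id) -lead_coefE.
by rewrite (monicP _) ?monic_prod_XsubC ?mulr1.
Qed.

Lemma sum_subconst (r : seq algC) (k : algC) :
  \sum_(z <- r) (z - k) = \sum_(z <- r) z - k *+ size r.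
Proof.
elim: r => [|x d IH]; first by rewrite !big_nil subr0.
by rewrite !big_cons IH /= mulrS opprD addrACA.
Qed.

Lemma modn_aux (n t j : nat) : (t < n)%N -> (j < n)%N ->
  (((t + j) %% n + n - j) %% n)%N = t.
Proof.
move=> tn jn.
have [h|h] := ltnP (t + j) n.
  rewrite (modn_small h).
  have -> : (t + j + n - j = t + n)%N by lia.
  by rewrite modnDr modn_small.
have -> : ((t + j) %% n = t + j - n)%N.
  have -> : (t + j = (t + j - n) + n)%N by lia.
  rewrite modnDr modn_small //; lia.
have -> : (t + j - n + n - j = t)%N by lia.
by rewrite modn_small.
Qed.

Section Circ.
Variables (n : nat) (S : {set 'I_n.+1}).
Hypothesis HS : is_symbol S.
Let A := circulant_adj S.

Lemma trA : \tr A = 0.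
Proof.
rewrite /mxtrace big1 // => i _; rewrite mxE.
case: existsP => //= -[s /andP[sS /eqP Hs]].
have : (0 < nat_of_ord s)%N := proj1 HS s sS; rewrite Hs.
have -> : (i + n.+1 - i = n.+1)%N by lia.
by rewrite modnn.
Qed.

Lemma eig_k : eigenvalue A (#|S|%:R).
Proof.
apply/eigenvalueP; exists (const_mx 1); last first.
  apply/eqP => /matrixP /(_ 0 0); rewrite !mxE => /eqP; by rewrite oner_eq0.
apply/matrixP => i0 j; rewrite !mxE.
under eq_bigr => i _ do rewrite !mxE mul1r.
rewrite mulr1 -natr_sum; congr (_ %:R).
pose f (t : 'I_n.+1) : 'I_n.+1 := inord ((t + j) %% n.+1).
have fE t : nat_of_ord (f t) = ((t + j) %% n.+1)%N by rewrite /f inordK // ltn_mod.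
have finj : injective f.
  move=> t1 t2 /(congr1 (@nat_of_ord _)); rewrite !fE => H.
  apply: val_inj => /=.
  by rewrite -(@modn_aux n.+1 t1 j) // H modn_aux.
rewrite (reindex_inj finj) /=.
rewrite -sum1_card [RHS]big_mkcond /=; apply: eq_bigr => t _.
rewrite fE modn_aux //.
case: (boolP [exists s in S, _]) => [/existsP[s /andP[sS /eqP Hs]]|H].
  have ts : t = s by apply: ord_inj; rewrite Hs.
  by rewrite ts sS.
by case: ifP => // tS; case/negP: H; apply/existsP; exists t; rewrite tS eqxx.
Qed.

Definition Bint : 'M[int]_n.+1 :=
  \matrix_(i < n.+1, j < n.+1)
    (([exists s in S, val s == ((val i + n.+1 - val j) %% n.+1)%N]) : nat)%:Z.

Lemma AB : A = map_mx intr Bint.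
Proof. by apply/matrixP => i j; rewrite !mxE. Qed.

Lemma eig_Aint l : eigenvalue A l -> l \in Aint.
Proof.
move=> el; apply: (@root_monic_Aint (char_poly A)).
- by rewrite -eigenvalue_root_char.
- exact: char_poly_monic.
rewrite AB -map_char_poly; apply/polyOverP => i; rewrite coef_map.
exact: intr_int.
Qed.

Lemma roots_sum : exists r : seq algC,
  [/\ size r = n.+1, forall z, z \in r -> eigenvalue A z & \sum_(z <- r) z = 0].
Proof.
have [r Dr] := closed_field_poly_normal (char_poly A).
rewrite (monicP (char_poly_monic A)) scale1r in Dr.
have sr : size r = n.+1.
  by apply: succn_inj; rewrite -(size_prod_XsubC r id) -Dr size_char_poly.
exists r; split => //.
  by move=> z zr; rewrite eigenvalue_root_char Dr root_prod_XsubC.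
have := char_poly_trace A (ltn0Sn n).
rewrite trA oppr0 Dr.
have -> : (\prod_(z <- r) ('X - z%:P))`_(n.+1).-1 =
          ('X * \prod_(z <- r) ('X - z%:P))`_(size r).
  by rewrite coefXM sr.
by rewrite coef_prodXsubC_sum => /eqP; rewrite oppr_eq0 => /eqP.
Qed.

End Circ.

Theorem theorem1 (n : nat) (S : {set 'I_n}) :
  (4 <= n)%N ->
  is_symbol S ->
  (exists a b c d : algC,
      [/\ eigenvalue (circulant_adj S) a, eigenvalue (circulant_adj S) b,
          eigenvalue (circulant_adj S) c & eigenvalue (circulant_adj S) d] /\
      uniq [:: a; b; c; d]) ->
  (forall li lj lr ls : algC,
      eigenvalue (circulant_adj S) li -> eigenvalue (circulant_adj S) lj ->
      eigenvalue (circulant_adj S) lr -> eigenvalue (circulant_adj S) ls ->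
      lr != ls -> (li - lj) / (lr - ls) \in Crat) ->
  forall l : algC, eigenvalue (circulant_adj S) l -> l \in Num.int.
Proof.
case: n S => [|n] S // _ HS _ Hrat l el.
apply: (Cint_rat_Aint _ (@eig_Aint n S l el)).
set k : algC := #|S|%:R.
have kQ : k \in Crat by apply: rpred_nat.
have ek := @eig_k n S.
suff allQ : forall e, eigenvalue (circulant_adj S) e -> e \in Crat by exact: allQ.
move=> e ee; apply/negPn/negP => eQ.
have dne : e - k != 0.
  by apply: contra eQ; rewrite subr_eq0 => /eqP ->.
have [r [sr er sum0]] := @roots_sum n S HS.
pose Q := \sum_(z <- r) ((z - k) / (e - k)).
have QQ : Q \in Crat.
  rewrite /Q big_seq; apply: rpred_sum => z zr; apply: Hrat => //; first exact: er.
  by rewrite -subr_eq0.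
have HQ : Q * (e - k) = - k *+ n.+1.
  rewrite /Q mulr_suml.
  under eq_bigr => z _ do rewrite divfK //.
  by rewrite sum_subconst sum0 sr sub0r mulNrn.
have [Q0|Qn0] := eqVneq Q 0.
  move: HQ; rewrite Q0 mul0r => /esym /eqP; rewrite mulNrn oppr_eq0.
  rewrite -mulr_natr mulf_eq0 pnatr_eq0 /= pnatr_eq0 orbF => /eqP /cards0_eq S0.
  have A0 : circulant_adj S = 0.
    apply/matrixP => i j; rewrite !mxE S0.
    by case: existsP => // -[s]; rewrite inE.
  move/eigenvalueP: ee => [v]; rewrite A0 mulmx0 => /esym /eqP.
  rewrite scaler_eq0 => /orP [e0|v0 vn0]; last by rewrite v0 in vn0.
  by move: eQ; rewrite (eqP e0) rpred0.
apply: (negP eQ).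
have -> : e = (e - k) + k by rewrite subrK.
apply: rpredD => //.
have -> : e - k = (- k *+ n.+1) / Q by rewrite -HQ mulrC mulKf.
by apply: rpred_div => //; rewrite rpredMn // rpredN.
Qed.
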